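(* Let $n \ge 2$ and let $Q(x) = x_1x_2 + x_3x_4 + \cdots + x_{2n-1}x_{2n}$ be the hyperbolic quadratic form on $V(2n,2)$, with associated symmetric bilinear form $B(x,y) = Q(x+y)-Q(x)-Q(y)$ and orthogonality $\perp$ with respect to $B$. Let $\Pi$ and $\Sigma$ be two totally singular $n$-dimensional subspaces with $\Pi \cap \Sigma = 0$. For a non-singular point $X = \langle x\rangle$ (i.e. $Q(x) \neq 0$), put $G = X^\perp \cap \Pi$, $H = X^\perp \cap \Sigma$, and let $P = G^\perp \cap \Sigma$; define $f(X) = (P,H)$. Then $P$ is a $1$-dimensional subspace of $\Sigma$, $H$ is an $(n-1)$-dimensional subspace of $\Sigma$, and $P \not\subseteq H$, i.e. $f(X)$ is a point-hyperplane antiflag of $\Sigma \cong V(n,2)$.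
   Context: Subspaces are taken in the vector-space sense: points are $1$-dimensional subspaces, hyperplanes of $\Sigma$ are its $(n-1)$-dimensional subspaces. A point $\langle x\rangle$ is singular if $Q(x)=0$; a subspace is totally singular if all its points are singular. A point-hyperplane antiflag of a vector space $V$ is a pair $(P,H)$ with $P$ a $1$-dimensional subspace, $H$ a hyperplane, and $P \not\subseteq H$. *)

(* Defs.v *)
From HB Require Import structures.
From mathcomp Require Import all_boot all_order all_algebra.
Set Implicit Arguments. Unset Strict Implicit. Unset Printing Implicit Defensive.
Import GRing.Theory.
Local Open Scope ring_scope.

(* The ambient space V(2n,2) is 'rV['F_2]_(n.*2); coordinates x_1..x_{2n}
   correspond to indices 0..2n-1. *)
Notation V2 n := 'rV['F_2]_(n.*2).

Definition coordn (R : Type) (r0 : R) m (x : 'rV[R]_m) (k : nat) : R :=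
  match @insub nat (fun k => k < m)%N _ k with
  | Some i => x 0 i
  | None => r0
  end.

Definition hypQ (n : nat) (x : V2 n) : 'F_2 :=
  \sum_(i < n) coordn 0 x i.*2 * coordn 0 x i.*2.+1.

Definition hypB (n : nat) (x y : V2 n) : 'F_2 :=
  hypQ (x + y) - hypQ x - hypQ y.

Definition Bfun (n : nat) (u : V2 n) : 'Hom(V2 n, ('F_2)^o) :=
  linfun (fun y : V2 n => (hypB u y : ('F_2)^o)).

(* orthogonal complement U^perp w.r.t. B: the vectors orthogonal to every
   vector of a basis of U (equivalently, by bilinearity of B, to all of U) *)
Definition perp (n : nat) (U : {vspace V2 n}) : {vspace V2 n} :=
  (\bigcap_(u <- vbasis U) lker (Bfun u))%VS.

Definition totally_singular (n : nat) (U : {vspace V2 n}) : Prop :=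
  forall v, v \in U -> hypQ v = 0.

(* Main.v *)
Require Import Defs.
From HB Require Import structures.
From mathcomp Require Import all_boot all_order all_algebra.
From mathcomp Require Import ring zify.
Set Implicit Arguments. Unset Strict Implicit. Unset Printing Implicit Defensive.
Import GRing.Theory.
Local Open Scope ring_scope.

Section B.
Variable n : nat.
Implicit Types x y z v : V2 n.

Notation c x k := (coordn 0 x k).

Lemma coordnD x y k : c (x + y) k = c x k + c y k.
Proof. by rewrite /coordn; case: insubP => [i _ _|_]; rewrite ?mxE ?addr0. Qed.

Lemma coordnZ (a : 'F_2) x k : c (a *: x) k = a * c x k.
Proof. by rewrite /coordn; case: insubP => [i _ _|_]; rewrite ?mxE ?mulr0. Qed.

Lemma coordn_delta (j : 'I_(n.*2)) k : c (delta_mx 0 j : V2 n) k = (k == val j)%:R.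
Proof.
rewrite /coordn; case: insubP => [i _ <-|H]; first by rewrite mxE eqxx.
case: eqP => // Hk; move: H; rewrite Hk ltn_ord //.
Qed.

Lemma hypBE x y : hypB x y =
  \sum_(i < n) (c x i.*2 * c y i.*2.+1 + c y i.*2 * c x i.*2.+1).
Proof.
rewrite /hypB /hypQ -!sumrB; apply: eq_bigr => i _.
rewrite !coordnD; ring.
Qed.

Lemma hypBC x y : hypB x y = hypB y x.
Proof. rewrite /hypB [x + y]addrC; ring. Qed.

Lemma hypB_lin y : linear (fun x : V2 n => (hypB x y : ('F_2)^o)).
Proof.
move=> a x z; rewrite !hypBE /GRing.scale /= mulr_sumr -big_split /=.
apply: eq_bigr => i _; rewrite !coordnD !coordnZ; ring.
Qed.

Definition Bl y : V2 n -> ('F_2)^o := fun x => hypB x y.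
HB.instance Definition _ y := GRing.isLinear.Build _ _ _ _ (Bl y) (hypB_lin y).

Lemma hypB_linr u : linear (fun y : V2 n => (hypB u y : ('F_2)^o)).
Proof. by move=> a x z; rewrite !(hypBC u); exact: hypB_lin. Qed.

Definition Br u : V2 n -> ('F_2)^o := fun y => hypB u y.
HB.instance Definition _ u := GRing.isLinear.Build _ _ _ _ (Br u) (hypB_linr u).

Lemma BfunE u y : Bfun u y = hypB u y.
Proof. exact: (lfunE (Br u) y). Qed.


Lemma dimF2o : \dim (fullv : {vspace ('F_2)^o}) = 1%N.
Proof. by rewrite dimvf. Qed.

Lemma dimV : \dim (fullv : {vspace V2 n}) = n.*2.
Proof. by rewrite dimvf dim_matrix mul1r. Qed.

Lemma mem_bigcap_ker (s : seq (V2 n)) v :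
  (v \in (\bigcap_(u <- s) lker (Bfun u))%VS) = all (fun u => hypB u v == 0) s.
Proof.
elim: s => [|u s IH]; first by rewrite big_nil memvf.
by rewrite big_cons memv_cap memv_ker BfunE IH.
Qed.

Lemma memv_perp (U : {vspace V2 n}) v : v \in perp U <-> (forall u, u \in U -> hypB u v = 0).
Proof.
rewrite /perp mem_bigcap_ker; split.
  move/allP=> H u Hu; rewrite (coord_vbasis Hu).
  have -> : forall w, hypB w v = Bl v w by [].
  rewrite linear_sum big1 // => i _; rewrite linearZ /=.
  by rewrite /Bl (eqP (H _ (mem_nth 0 _))) ?scaler0 // size_tuple ltn_ord.
move=> H; apply/allP => u Hu; apply/eqP/H; exact: vbasis_mem.
Qed.

Lemma dim_img_le1 (f : 'Hom(V2 n, ('F_2)^o)) (U : {vspace V2 n}) : (\dim (f @: U) <= 1)%N.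
Proof. by rewrite -[X in (_ <= X)%N]dimF2o dimvS // subvf. Qed.

Lemma dim_ker_hyper (f : 'Hom(V2 n, ('F_2)^o)) (U : {vspace V2 n}) u :
  u \in U -> f u != 0 -> \dim (U :&: lker f) = (\dim U).-1.
Proof.
move=> Hu Hf; have := limg_ker_dim f U; have := dim_img_le1 f U.
have : (0 < \dim (f @: U))%N.
  rewrite lt0n dimv_eq0; apply/negP => /eqP H0.
  by move: (memv_img f Hu); rewrite H0 memv0 (negbTE Hf).
move=> h1 h2 <-; have -> : \dim (f @: U) = 1%N by apply/eqP; rewrite eqn_leq h2 h1.
by rewrite addn1.
Qed.

Lemma dim_ker_ge (f : 'Hom(V2 n, ('F_2)^o)) (U : {vspace V2 n}) :
  ((\dim U).-1 <= \dim (U :&: lker f))%N.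
Proof. have := limg_ker_dim f U; have := dim_img_le1 f U; set d := \dim (f @: U); set e := \dim (U :&: _); set m := \dim U; move=> h1 h2; lia. Qed.

Lemma dim_bigcap_ge (s : seq (V2 n)) :
  (n.*2 <= \dim (\bigcap_(u <- s) lker (Bfun u))%VS + size s)%N.
Proof.
elim: s => [|u s IH]; first by rewrite big_nil dimV addn0.
move: IH; rewrite big_cons capvC /=.
have := dim_ker_ge (Bfun u) (\bigcap_(u <- s) lker (Bfun u))%VS.
set d := \dim (_ :&: _); set e := \dim (\bigcap_(u <- s) lker (Bfun u))%VS.
move=> h1 h2; lia.
Qed.

Lemma dim_perp_ge (U : {vspace V2 n}) : (n.*2 <= \dim (perp U) + \dim U)%N.
Proof. by have := dim_bigcap_ge (vbasis U); rewrite size_tuple. Qed.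


Lemma nondeg_aux p (i : 'I_n) :
  (forall y : V2 n, hypB y p = 0) -> c p i.*2 = 0 /\ c p i.*2.+1 = 0.
Proof.
move=> H; have Hi := ltn_ord i.
have j0 : (i.*2 < n.*2)%N by lia.
have j1 : (i.*2.+1 < n.*2)%N by lia.
split.
  have := H (delta_mx 0 (Ordinal j1)); rewrite hypBE (bigD1 i) //= big1.
    rewrite !coordn_delta /= eqxx.
    have -> : (i.*2 == i.*2.+1) = false by lia.
    by rewrite mul0r add0r mulr1 addr0.
  move=> i' Hne; rewrite !coordn_delta /=.
  have -> : (i'.*2 == i.*2.+1) = false by lia.
  have -> : (i'.*2.+1 == i.*2.+1) = false.
    by apply/negbTE; apply: contra Hne => /eqP [] /eqP; rewrite -!muln2 eqn_pmul2r // => /eqP/val_inj ->.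
  by rewrite mul0r mulr0 addr0.
have := H (delta_mx 0 (Ordinal j0)); rewrite hypBE (bigD1 i) //= big1.
  rewrite !coordn_delta /= eqxx.
  have -> : (i.*2.+1 == i.*2) = false by lia.
  by rewrite mul1r mulr0 addr0 addr0.
move=> i' Hne; rewrite !coordn_delta /=.
have -> : (i'.*2.+1 == i.*2) = false by lia.
have -> : (i'.*2 == i.*2) = false.
  by apply/negbTE; apply: contra Hne => /eqP /eqP; rewrite -!muln2 eqn_pmul2r // => /eqP/val_inj ->.
by rewrite mul0r mulr0 addr0.
Qed.

Lemma nondeg p : (forall y : V2 n, hypB y p = 0) -> p = 0.
Proof.
move=> H; apply/rowP => k; rewrite mxE.
have Hk2 : (k./2 < n)%N by have := ltn_ord k; lia.
have [h0 h1] := nondeg_aux (Ordinal Hk2) H.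
have : c p k = 0.
  rewrite -(odd_double_half k); case: (odd k); [exact: h1 | exact: h0].
rewrite /coordn; case: insubP => [i _ Hv|]; last by rewrite ltn_ord.
by have -> : i = k by apply: val_inj.
Qed.

End B.

Lemma F2one (c : 'F_2) : c != 0 -> c = 1.
Proof. by case: c => [[|[|m]] Hm] //= _; apply: val_inj. Qed.

Theorem mainTheorem1 (n : nat) (Pi Sigma : {vspace V2 n}) (x : V2 n) :
  (2 <= n)%N ->
  totally_singular Pi -> totally_singular Sigma ->
  \dim Pi = n -> \dim Sigma = n ->
  (Pi :&: Sigma = 0)%VS ->
  hypQ x != 0 ->
  let X := <[x]>%VS in
  let G := (perp X :&: Pi)%VS in
  let H := (perp X :&: Sigma)%VS in
  let P := (perp G :&: Sigma)%VS in
  [/\ (P <= Sigma)%VS, \dim P = 1%N,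
      (H <= Sigma)%VS, \dim H = n.-1
    & ~~ (P <= H)%VS].
Proof.
move=> n2 TPi TSig dPi dSig cap0 Qx X G H P.
have dimPS : \dim (Pi + Sigma) = n.*2.
  by have := dimv_sum_cap Pi Sigma; rewrite cap0 dimv0 dPi dSig addn0 addnn.
have full : (Pi + Sigma)%VS = fullv.
  by apply/eqP; rewrite eqEdim subvf dimPS dimV leqnn.
have dec : forall v, exists2 a, a \in Pi & exists2 s, s \in Sigma & v = a + s.
  by move=> v; apply/memv_addP; rewrite full memvf.
have [a Ha [s Hs xE]] := dec x.
have Qas : hypB a s = hypQ x by rewrite /hypB -xE (TPi _ Ha) (TSig _ Hs) !subr0.
have Bsing : forall U : {vspace V2 n}, totally_singular U -> forall u v, u \in U -> v \in U -> hypB u v = 0.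
  by move=> U TU u v Hu Hv; rewrite /hypB !TU ?subr0 // rpredD.
have BlinL : forall u v w : V2 n, hypB (u + v) w = hypB u w + hypB v w.
  by move=> u v w; exact: (raddfD (Bl w)).
have BlinR : forall u v w : V2 n, hypB w (u + v) = hypB w u + hypB w v.
  by move=> u v w; rewrite !(hypBC w).
have perpX : forall v, v \in perp X <-> hypB x v = 0.
  move=> v; rewrite memv_perp; split => [H1|H1 u /vlineP [k ->]].
    by apply: H1; exact: memv_line.
  change (Bl v (k *: x) = 0); rewrite linearZZ.
  rewrite [X in k *: X](_ : _ = 0) ?scaler0 //; exact: H1.
have Bxs : hypB x s != 0.
  by rewrite xE BlinL (Bsing _ TSig s s Hs Hs) addr0 Qas.
have Bxa : hypB x a != 0.
  by rewrite xE BlinL (Bsing _ TPi a a Ha Ha) add0r hypBC Qas.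
have HE : forall U : {vspace V2 n}, (perp X :&: U)%VS = (U :&: lker (Bfun x))%VS.
  move=> U; apply/vspaceP => v; rewrite !memv_cap memv_ker BfunE andbC.
  congr (_ && _); apply/idP/eqP; [by move/perpX | by move=> h; apply/perpX].
have dimH : \dim H = n.-1.
  by rewrite /H HE (dim_ker_hyper (u:=s)) ?dSig // BfunE.
have dimG : \dim G = n.-1.
  by rewrite /G HE (dim_ker_hyper (u:=a)) ?dPi // BfunE.
have PH0 : forall p, p \in P -> p \in H -> p = 0.
  move=> p; rewrite !memv_cap => /andP [pG pS] /andP [pX _].
  move/perpX: pX => pX.
  have pG' := (memv_perp G p).1 pG.
  have Bap : hypB a p = 0.
    by move: pX; rewrite xE BlinL (Bsing _ TSig s p Hs pS) addr0.
  apply: nondeg => y; have [a' Ha' [s' Hs' ->]] := dec y.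
  rewrite BlinL (Bsing _ TSig s' p Hs' pS) addr0.
  case: (hypB x a' =P 0) => h.
    by apply: pG'; rewrite memv_cap Ha' andbT; apply/perpX.
  have : hypB (a' + a) p = 0.
    apply: pG'; rewrite memv_cap (memvD Ha' Ha) andbT; apply/perpX.
    by rewrite BlinR (F2one Bxa) (F2one (introN eqP h)); apply: val_inj.
  by rewrite BlinL Bap addr0.
have PH : (P :&: H)%VS = 0%VS.
  apply/eqP; rewrite -subv0; apply/subvP => v; rewrite memv_cap memv0 => /andP [h1 h2].
  by rewrite (PH0 _ h1 h2).
have dimP : \dim P = 1%N.
  have h1 := dimv_sum_cap P H; rewrite PH dimv0 addn0 in h1.
  have h2 : (\dim (P + H) <= n)%N.
    by rewrite -[X in (_ <= X)%N]dSig dimvS // subv_add !capvSr.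
  have h3 := dim_perp_ge G.
  have h4 := dimv_sum_cap (perp G) Sigma.
  have h5 : (\dim (perp G + Sigma) <= n.*2)%N by rewrite -[X in (_ <= X)%N](dimV n) dimvS // subvf.
  rewrite -/P dSig in h4; rewrite dimG in h3; rewrite dimH in h1.
  move: h1 h2 h3 h4 h5.
  set d1 := \dim (P + H); set d2 := \dim P; set d3 := \dim (perp G); set d4 := \dim (perp G + Sigma).
  move=> *; lia.
split; rewrite ?capvSr //.
apply/negP => /capv_idPl hPH; move: dimP; rewrite -hPH PH dimv0 //.
Qed.
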